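(* Let $\lambda>0$, $\gamma>2$, $c>0$ and $\rho>0$ be fixed, and let $W_e>0$. Define $$g(r)=r^{-\gamma-2}\Big(\gamma^2+\frac{4W_e}{c^2}r^2\Big),\qquad Z(s)=\int_0^\infty\big[1-e^{-s g(r)}\big]r\,dr,\qquad \mathrm{CRB}_{\mathrm{LB}}=\frac{4}{\rho}\int_0^\infty e^{-2\pi\lambda Z(s)}\,ds,$$ and $$\mathrm{CRB}_{\mathrm{LB,W}}=\frac{c^2(\pi\lambda)^{-\gamma/2}}{\rho W_e}\,\Gamma^{-\gamma/2}\Big(1-\frac{2}{\gamma}\Big)\,\Gamma\Big(1+\frac{\gamma}{2}\Big).$$ Then $$\Big(1-\frac{\pi\lambda c^2\gamma}{2W_e}\Big)\mathrm{CRB}_{\mathrm{LB,W}}<\mathrm{CRB}_{\mathrm{LB}}<\mathrm{CRB}_{\mathrm{LB,W}}.$$ Hence $\mathrm{CRB}_{\mathrm{LB}}/\mathrm{CRB}_{\mathrm{LB,W}}\to 1$ as $W_e\to\infty$, with convergence rate $O(1/W_e)$.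
   Context: Here $\lambda$ is the sensor density of a homogeneous Poisson point process of sensors, $\gamma$ is the path-loss exponent, $c$ is the speed of light, $\rho$ is a signal-to-noise ratio constant, and $W_e$ is the effective bandwidth of the transmitted signal. $\Gamma$ denotes the Gamma function, and $\Gamma^{-\gamma/2}(z)$ means $\Gamma(z)^{-\gamma/2}$. *)

(* Defs.v *)
From Stdlib Require Import Reals.
From Coquelicot Require Import Coquelicot.
Open Scope R_scope.

Definition Int0inf (f : R -> R) : R :=
  RInt_gen f (at_right 0) (Rbar_locally p_infty).

Definition Gamma (z : R) : R :=
  Int0inf (fun t => Rpower t (z - 1) * exp (- t)).

Definition gfun (gam c We r : R) : R :=
  Rpower r (- gam - 2) * (gam ^ 2 + 4 * We / c ^ 2 * r ^ 2).

Definition Zfun (gam c We s : R) : R :=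
  Int0inf (fun r => (1 - exp (- s * gfun gam c We r)) * r).

Definition CRB_LB (lam gam c rho We : R) : R :=
  4 / rho * Int0inf (fun s => exp (- 2 * PI * lam * Zfun gam c We s)).

Definition CRB_LBW (lam gam c rho We : R) : R :=
  c ^ 2 * Rpower (PI * lam) (- gam / 2) / (rho * We)
  * Rpower (Gamma (1 - 2 / gam)) (- gam / 2) * Gamma (1 + gam / 2).

(* Main.v *)
Require Import Defs.
From Stdlib Require Import Reals Lra Classical.
From Coquelicot Require Import Coquelicot.
Open Scope R_scope.

Definition IG (f : R -> R) (l : R) :=
  is_RInt_gen f (at_right 0) (Rbar_locally p_infty) l.
Definition C0 (f : R -> R) := forall x, 0 < x -> continuous f x.

Lemma IG_unique f l : IG f l -> Int0inf f = l.
Proof.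
  intros H. unfold Int0inf. apply is_RInt_gen_unique; auto.
Qed.

Lemma IG_char f l :
  (forall eps, 0 < eps -> exists d, 0 < d /\ exists N, forall a b,
     0 < a < d -> N < b -> exists y, is_RInt f a b y /\ Rabs (y - l) < eps) ->
  IG f l.
Proof.
  intros H P [eps Heps].
  destruct (H eps (cond_pos eps)) as (d & Hd & N & HN).
  unfold filtermapi.
  apply Filter_prod with (Q := fun a => 0 < a < d) (R := fun b => N < b).
  - exists (mkposreal d Hd). intros y Hy Hpos. simpl in Hy.
    unfold ball in Hy; simpl in Hy; unfold AbsRing_ball, abs, minus, plus, opp in Hy; simpl in Hy.
    rewrite Ropp_0, Rplus_0_r in Hy. split; auto. apply Rabs_def2 in Hy. lra.
  - exists N. auto.
  - intros a b Ha Hb. destruct (HN a b Ha Hb) as [y [Hy Hl]].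
    exists y. split; [exact Hy|]. apply Heps.
    unfold ball; simpl; unfold AbsRing_ball, abs, minus, plus, opp; simpl. exact Hl.
Qed.

Lemma IG_char_inv f l : IG f l ->
  forall eps, 0 < eps -> exists d, 0 < d /\ exists N, forall a b,
     0 < a < d -> N < b -> exists y, is_RInt f a b y /\ Rabs (y - l) < eps.
Proof.
  intros H eps Heps.
  assert (HP : locally l (fun y => Rabs (y - l) < eps)).
  { exists (mkposreal eps Heps). intros y Hy. exact Hy. }
  specialize (H _ HP). destruct H as [Q R HQ HR HQR].
  destruct HQ as [d Hd]. destruct HR as [N HN].
  exists d. split; [apply cond_pos|]. exists N. intros a b Ha Hb.
  apply (HQR a b); auto. apply Hd; [|lra].
  unfold ball; simpl; unfold AbsRing_ball, abs, minus, plus, opp; simpl.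
  rewrite Ropp_0, Rplus_0_r, Rabs_right; lra.
Qed.

Lemma C0_ex f a b : C0 f -> 0 < a -> 0 < b -> ex_RInt f a b.
Proof.
  intros Hf Ha Hb. apply (ex_RInt_continuous (V := R_CompleteNormedModule)). intros z Hz. apply Hf.
  destruct Hz as [Hz _]. eapply Rlt_le_trans; [|exact Hz].
  apply Rmin_case; auto.
Qed.

Lemma IG_lim f l : C0 f -> IG f l ->
  forall eps, 0 < eps -> exists d, 0 < d /\ exists N, forall a b,
     0 < a < d -> N < b -> Rabs (RInt f a b - l) < eps.
Proof.
  intros Hf H eps Heps. destruct (IG_char_inv f l H eps Heps) as (d & Hd & N & HN).
  exists d. split; auto. exists N. intros a b Ha Hb.
  destruct (HN a b Ha Hb) as [y [Hy Hl]]. rewrite (is_RInt_unique _ _ _ _ Hy). auto.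
Qed.

Lemma IG_of_lim f l : C0 f ->
  (forall eps, 0 < eps -> exists d, 0 < d /\ exists N, forall a b,
     0 < a < d -> N < b -> Rabs (RInt f a b - l) < eps) -> IG f l.
Proof.
  intros Hf H. apply IG_char. intros eps Heps.
  destruct (H eps Heps) as (d & Hd & N & HN).
  exists d; split; auto. exists (Rmax N 0). intros a b Ha Hb.
  exists (RInt f a b). split.
  - apply (RInt_correct (V:=R_CompleteNormedModule)), C0_ex; auto; try lra. eapply Rle_lt_trans; [apply Rmax_r|exact Hb].
  - apply HN; auto. eapply Rle_lt_trans; [apply Rmax_l|exact Hb].
Qed.

Lemma IG_ext f g l : (forall x, 0 < x -> f x = g x) -> IG f l -> IG g l.
Proof.
  intros Hfg H. unfold IG. eapply is_RInt_gen_ext; [|exact H].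
  apply Filter_prod with (Q := fun a => 0 < a) (R := fun b => 0 < b).
    + exists (mkposreal 1 Rlt_0_1). intros; auto.
    + exists 0. auto.
    + intros a b Ha Hb x Hx. simpl in Hx. apply Hfg.
      destruct Hx as [Hx _]. eapply Rle_lt_trans; [|exact Hx].
      apply Rmin_case; lra.
Qed.

Lemma IG_scal f l k : IG f l -> IG (fun x => k * f x) (k * l).
Proof.
  intros H. unfold IG. apply (is_RInt_gen_scal (Fa := at_right 0) (Fb := Rbar_locally p_infty) f k l); auto.
Qed.

Lemma IG_plus f g lf lg : IG f lf -> IG g lg -> IG (fun x => f x + g x) (lf + lg).
Proof.
  intros H1 H2. unfold IG. apply (is_RInt_gen_plus (Fa := at_right 0) (Fb := Rbar_locally p_infty) f g lf lg); auto.
Qed.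

Lemma IG_minus f g lf lg : IG f lf -> IG g lg -> IG (fun x => f x - g x) (lf - lg).
Proof.
  intros H1 H2. unfold IG. apply (is_RInt_gen_minus (Fa := at_right 0) (Fb := Rbar_locally p_infty) f g lf lg); auto.
Qed.

Lemma pick d1 d2 N1 N2 : 0 < d1 -> 0 < d2 ->
  exists a b, 0 < a /\ a < d1 /\ a < d2 /\ a < 1 /\ N1 < b /\ N2 < b /\ 2 < b.
Proof.
  intros H1 H2. exists (Rmin (Rmin d1 d2) 1 / 2), (Rmax (Rmax N1 N2) 2 + 1).
  pose proof (Rmin_l (Rmin d1 d2) 1). pose proof (Rmin_r (Rmin d1 d2) 1).
  pose proof (Rmin_l d1 d2). pose proof (Rmin_r d1 d2).
  pose proof (Rmax_l (Rmax N1 N2) 2). pose proof (Rmax_r (Rmax N1 N2) 2).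
  pose proof (Rmax_l N1 N2). pose proof (Rmax_r N1 N2).
  assert (0 < Rmin (Rmin d1 d2) 1).
  { apply Rmin_glb_lt; [apply Rmin_glb_lt|]; lra. }
  repeat split; lra.
Qed.

Lemma Chasles_R f a b c : C0 f -> 0 < a -> 0 < b -> 0 < c ->
  RInt f a c = RInt f a b + RInt f b c.
Proof.
  intros Hf Ha Hb Hc. symmetry.
  apply (RInt_Chasles (V:=R_CompleteNormedModule)); apply C0_ex; auto.
Qed.

Lemma chasles3 f a a0 b0 b : C0 f -> (forall x, 0 < x -> 0 <= f x) ->
  0 < a -> a <= a0 -> a0 <= b0 -> b0 <= b -> RInt f a0 b0 <= RInt f a b.
Proof.
  intros Hf Hp Ha H1 H2 H3.
  rewrite (Chasles_R f a a0 b), (Chasles_R f a0 b0 b); try lra; auto.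
  assert (0 <= RInt f a a0).
  { apply RInt_ge_0; auto. apply C0_ex; auto; lra. intros x Hx; apply Hp; lra. }
  assert (0 <= RInt f b0 b).
  { apply RInt_ge_0; auto. apply C0_ex; auto; lra. intros x Hx; apply Hp; lra. }
  lra.
Qed.

Lemma IG_le f g lf lg : C0 f -> C0 g -> IG f lf -> IG g lg ->
  (forall x, 0 < x -> f x <= g x) -> lf <= lg.
Proof.
  intros Hf Hg H1 H2 Hle. apply Rnot_lt_le; intro Hlt.
  destruct (IG_lim f lf Hf H1 ((lf - lg)/2)) as (d1 & Hd1 & N1 & HN1); [lra|].
  destruct (IG_lim g lg Hg H2 ((lf - lg)/2)) as (d2 & Hd2 & N2 & HN2); [lra|].
  destruct (pick d1 d2 N1 N2 Hd1 Hd2) as (a & b & Ha & ?&?&?&?&?&?).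
  assert (RInt f a b <= RInt g a b).
  { apply RInt_le; try lra; try (apply C0_ex; auto; lra). intros x Hx; apply Hle; lra. }
  specialize (HN1 a b ltac:(lra) ltac:(lra)). specialize (HN2 a b ltac:(lra) ltac:(lra)).
  apply Rabs_def2 in HN1. apply Rabs_def2 in HN2. lra.
Qed.

Lemma IG_ge_part f l : C0 f -> IG f l -> (forall x, 0 < x -> 0 <= f x) ->
  forall a b, 0 < a -> a <= b -> RInt f a b <= l.
Proof.
  intros Hf H Hp a b Ha Hab. apply le_epsilon. intros eps Heps.
  destruct (IG_lim f l Hf H eps Heps) as (d & Hd & N & HN).
  destruct (pick d a N b Hd Ha) as (a' & b' & Ha' & ?&?&?&?&?&?).
  specialize (HN a' b' ltac:(lra) ltac:(lra)). apply Rabs_def2 in HN.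
  pose proof (chasles3 f a' a b b' Hf Hp ltac:(lra) ltac:(lra) ltac:(lra) ltac:(lra)).
  lra.
Qed.

Lemma C0_minus f g : C0 f -> C0 g -> C0 (fun x => g x - f x).
Proof.
  intros Hf Hg x Hx. apply (continuous_minus (K:=R_AbsRing) (V:=R_NormedModule) g f); auto.
Qed.

Lemma IG_lt f g lf lg : C0 f -> C0 g -> IG f lf -> IG g lg ->
  (forall x, 0 < x -> f x < g x) -> lf < lg.
Proof.
  intros Hf Hg H1 H2 Hlt.
  pose proof (IG_minus g f lg lf H2 H1) as H3.
  pose proof (C0_minus f g Hf Hg) as Hc.
  assert (HH := IG_ge_part _ _ Hc H3 ltac:(intros x Hx; specialize (Hlt x Hx); lra) 1 2 ltac:(lra) ltac:(lra)).
  assert (RInt (fun _ => 0) 1 2 < RInt (fun x => g x - f x) 1 2).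
  { apply RInt_lt; try lra.
    - intros x Hx; apply Hc; lra.
    - intros x Hx; apply continuous_const.
    - intros x Hx; specialize (Hlt x ltac:(lra)); lra. }
  rewrite RInt_const in H. unfold scal in H; simpl in H; unfold mult in H; simpl in H.
  lra.
Qed.

Lemma IG_sup f M : C0 f -> (forall x, 0 < x -> 0 <= f x) ->
  (forall a b, 0 < a -> a <= b -> RInt f a b <= M) ->
  exists l, IG f l /\ l <= M /\ (forall a b, 0 < a -> a <= b -> RInt f a b <= l).
Proof.
  intros Hf Hp HM.
  set (E := fun y => exists a b, 0 < a /\ a <= b /\ y = RInt f a b).
  assert (HB : bound E).
  { exists M. intros y (a & b & Ha & Hab & ->). auto. }
  assert (HE : exists y, E y).
  { exists (RInt f 1 1), 1, 1. repeat split; lra. }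
  destruct (completeness E HB HE) as [l [Hub Hlub]].
  assert (Hup : forall a b, 0 < a -> a <= b -> RInt f a b <= l).
  { intros a b Ha Hab. apply Hub. exists a, b. auto. }
  exists l. split; [|split; auto].
  2:{ apply Hlub. intros y (a & b & Ha & Hab & ->). auto. }
  apply IG_of_lim; auto. intros eps Heps.
  assert (Hex : exists a0 b0, 0 < a0 /\ a0 <= b0 /\ l - eps < RInt f a0 b0).
  { apply NNPP; intro Hn.
    assert (l <= l - eps); [|lra].
    apply Hlub. intros y (a & b & Ha & Hab & ->).
    apply Rnot_lt_le; intro. apply Hn. exists a, b. auto. }
  destruct Hex as (a0 & b0 & Ha0 & Hab0 & Hl0).
  exists a0. split; auto. exists b0. intros a b Ha Hb.
  pose proof (chasles3 f a a0 b0 b Hf Hp ltac:(lra) ltac:(lra) ltac:(lra) ltac:(lra)).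
  pose proof (Hup a b ltac:(lra) ltac:(lra)).
  apply Rabs_def1; lra.
Qed.

Definition Lim0 (G : R -> R) A := forall eps, 0 < eps ->
  exists d, 0 < d /\ forall x, 0 < x < d -> Rabs (G x - A) < eps.
Definition LimInf (G : R -> R) B := forall eps, 0 < eps ->
  exists N, forall x, N < x -> Rabs (G x - B) < eps.

Lemma IG_FTC G g A B : (forall x, 0 < x -> is_derive G x (g x)) -> C0 g ->
  Lim0 G A -> LimInf G B -> IG g (B - A).
Proof.
  intros HD Hg HA HB. apply IG_of_lim; auto. intros eps Heps.
  destruct (HA (eps/2)) as [d [Hd Hd']]; [lra|].
  destruct (HB (eps/2)) as [N HN]; [lra|].
  exists d. split; auto. exists (Rmax N 0). intros a b Ha Hb.
  pose proof (Rmax_l N 0). pose proof (Rmax_r N 0).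
  rewrite (is_RInt_unique g a b (G b - G a)).
  - specialize (Hd' a Ha). specialize (HN b ltac:(lra)).
    apply Rabs_def2 in Hd'. apply Rabs_def2 in HN. apply Rabs_def1; lra.
  - apply (is_RInt_derive (V:=R_CompleteNormedModule) G g a b).
    + intros x [Hx _]. apply HD. eapply Rlt_le_trans; [|exact Hx]. apply Rmin_case; lra.
    + intros x [Hx _]. apply Hg. eapply Rlt_le_trans; [|exact Hx]. apply Rmin_case; lra.
Qed.

Lemma C0_subst f phi dphi : C0 f -> C0 dphi ->
  (forall x, 0 < x -> is_derive phi x (dphi x)) -> (forall x, 0 < x -> 0 < phi x) ->
  C0 (fun x => dphi x * f (phi x)).
Proof.
  intros Hf Hd HD Hp x Hx.
  apply (continuous_mult (K:=R_AbsRing) dphi (fun x => f (phi x))); auto.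
  apply continuous_comp.
  - apply (ex_derive_continuous (K:=R_AbsRing) (V:=R_NormedModule)). exists (dphi x). auto.
  - apply Hf. auto.
Qed.

Lemma RInt_subst f phi dphi a b : C0 f -> C0 dphi ->
  (forall x, 0 < x -> is_derive phi x (dphi x)) -> (forall x, 0 < x -> 0 < phi x) ->
  0 < a -> 0 < b ->
  RInt (fun x => dphi x * f (phi x)) a b = RInt f (phi a) (phi b).
Proof.
  intros Hf Hd HD Hp Ha Hb.
  apply is_RInt_unique.
  assert (Hm : forall x, Rmin a b <= x <= Rmax a b -> 0 < x).
  { intros x [Hx _]. eapply Rlt_le_trans; [|exact Hx]. apply Rmin_case; lra. }
  apply (is_RInt_comp (V:=R_CompleteNormedModule) f phi dphi a b).
  - intros x Hx. apply Hf, Hp, Hm, Hx.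
  - intros x Hx. split; [apply HD, Hm, Hx | apply Hd, Hm, Hx].
Qed.

Lemma IG_subst_inc f phi dphi l : C0 f -> C0 dphi ->
  (forall x, 0 < x -> is_derive phi x (dphi x)) -> (forall x, 0 < x -> 0 < phi x) ->
  (forall d, 0 < d -> exists e, 0 < e /\ forall x, 0 < x < e -> phi x < d) ->
  (forall N, exists M, forall x, M < x -> N < phi x) ->
  IG f l -> IG (fun x => dphi x * f (phi x)) l.
Proof.
  intros Hf Hd HD Hp H0 Hinf H.
  apply IG_of_lim; [apply C0_subst; auto|].
  intros eps Heps. destruct (IG_lim f l Hf H eps Heps) as (d & Hd0 & N & HN).
  destruct (H0 d Hd0) as (e & He & He'). destruct (Hinf N) as [M HM].
  exists e. split; auto. exists (Rmax M 0). intros a b Ha Hb.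
  pose proof (Rmax_l M 0). pose proof (Rmax_r M 0).
  rewrite RInt_subst; auto; try lra.
  apply HN.
  - split; [apply Hp; lra | apply He'; lra].
  - apply HM; lra.
Qed.

Lemma IG_subst_dec f phi dphi l : C0 f -> C0 dphi ->
  (forall x, 0 < x -> is_derive phi x (dphi x)) -> (forall x, 0 < x -> 0 < phi x) ->
  (forall N, exists e, 0 < e /\ forall x, 0 < x < e -> N < phi x) ->
  (forall d, 0 < d -> exists M, forall x, M < x -> phi x < d) ->
  IG f l -> IG (fun x => - dphi x * f (phi x)) l.
Proof.
  intros Hf Hd HD Hp H0 Hinf H.
  assert (HC : C0 (fun x => dphi x * f (phi x))) by (apply C0_subst; auto).
  apply IG_of_lim.
  { intros x Hx. apply (continuous_ext (fun x => opp (dphi x * f (phi x)))).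
    - intros; unfold opp; simpl; ring.
    - apply (continuous_opp (K:=R_AbsRing) (V:=R_NormedModule)), HC, Hx. }
  intros eps Heps. destruct (IG_lim f l Hf H eps Heps) as (d & Hd0 & N & HN).
  destruct (Hinf d Hd0) as (M & HM). destruct (H0 N) as [e [He He']].
  exists e. split; auto. exists (Rmax M 0). intros a b Ha Hb.
  pose proof (Rmax_l M 0). pose proof (Rmax_r M 0).
  assert (E : RInt (fun x => - dphi x * f (phi x)) a b = RInt f (phi b) (phi a)).
  { rewrite <- (opp_RInt_swap (V:=R_CompleteNormedModule) f (phi a) (phi b)) by (apply C0_ex; auto; apply Hp; lra).
    rewrite <- RInt_subst with (dphi := dphi); auto; try lra.
    rewrite <- (RInt_opp (V:=R_CompleteNormedModule)).
    - apply RInt_ext. intros; unfold opp; simpl; ring.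
    - apply C0_ex; auto; lra. }
  rewrite E. apply HN.
  - split; [apply Hp; lra | apply HM; lra].
  - apply He'; lra.
Qed.

Lemma exp_le x y : x <= y -> exp x <= exp y.
Proof. intros [H|H]; [left; apply exp_increasing; auto | subst; lra]. Qed.

Lemma ln_le_sub1 y : 0 < y -> ln y <= y - 1.
Proof. intros Hy. pose proof (exp_ineq1_le (ln y)). rewrite exp_ln in H; lra. Qed.

Lemma exp_pos_mul a b : exp a * exp b = exp (a + b).
Proof. rewrite exp_plus; auto. Qed.

Lemma pw_bound q t : 0 < q -> 0 < t ->
  exp (q * ln t) <= exp (q * ln (2 * q)) * exp (t / 2).
Proof.
  intros Hq Ht. rewrite exp_pos_mul. apply exp_le.
  assert (H := ln_le_sub1 (t / (2 * q)) ltac:(apply Rdiv_lt_0_compat; lra)).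
  rewrite ln_div in H; try lra.
  assert (q * (ln t - ln (2 * q)) <= q * (t / (2 * q) - 1)) by (apply Rmult_le_compat_l; lra).
  assert (q * (t / (2 * q) - 1) = t / 2 - q) by (field; lra).
  lra.
Qed.

Lemma one_minus_exp x : 0 <= x -> 0 <= 1 - exp (- x) <= x.
Proof.
  intros Hx. split.
  - assert (exp (- x) <= exp 0) by (apply exp_le; lra). rewrite exp_0 in H. lra.
  - pose proof (exp_ineq1_le (- x)). lra.
Qed.

Lemma exp_mono_lt a b : a < b -> exp a < exp b.
Proof. apply exp_increasing. Qed.

Lemma pow_small0 c : 0 < c -> forall eps, 0 < eps ->
  exists d, 0 < d /\ forall t, 0 < t < d -> exp (c * ln t) < eps.
Proof.
  intros Hc eps He. exists (exp (ln eps / c)). split; [apply exp_pos|].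
  intros t [Ht Htd]. apply ln_increasing in Htd; auto. rewrite ln_exp in Htd.
  rewrite <- (exp_ln eps) by auto. apply exp_increasing.
  apply Rmult_lt_compat_l with (r := c) in Htd; auto.
  replace (c * (ln eps / c)) with (ln eps) in Htd by (field; lra). lra.
Qed.

Lemma pow_smallinf c : c < 0 -> forall eps, 0 < eps ->
  exists N, 0 < N /\ forall t, N < t -> exp (c * ln t) < eps.
Proof.
  intros Hc eps He. exists (exp (ln eps / c)). split; [apply exp_pos|].
  intros t Htd. assert (0 < t) by (pose proof (exp_pos (ln eps / c)); lra).
  apply ln_increasing in Htd; [|apply exp_pos]. rewrite ln_exp in Htd.
  rewrite <- (exp_ln eps) by auto. apply exp_increasing.
  apply Rmult_lt_gt_compat_neg_l with (r := c) in Htd; auto.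
  replace (c * (ln eps / c)) with (ln eps) in Htd by (field; lra). lra.
Qed.

Lemma pow_big0 c : c < 0 -> forall K,
  exists d, 0 < d /\ forall t, 0 < t < d -> K < exp (c * ln t).
Proof.
  intros Hc K. set (K' := Rmax K 1). assert (HK : K <= K') by apply Rmax_l.
  assert (HK1 : 1 <= K') by apply Rmax_r.
  exists (exp (ln K' / c)). split; [apply exp_pos|].
  intros t [Ht Htd]. apply ln_increasing in Htd; auto. rewrite ln_exp in Htd.
  apply Rle_lt_trans with K'; auto.
  rewrite <- (exp_ln K') by lra. apply exp_increasing.
  apply Rmult_lt_gt_compat_neg_l with (r := c) in Htd; auto.
  replace (c * (ln K' / c)) with (ln K') in Htd by (field; lra). lra.
Qed.

Lemma pow_biginf c : 0 < c -> forall K,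
  exists N, 0 < N /\ forall t, N < t -> K < exp (c * ln t).
Proof.
  intros Hc K. set (K' := Rmax K 1). assert (HK : K <= K') by apply Rmax_l.
  assert (HK1 : 1 <= K') by apply Rmax_r.
  exists (exp (ln K' / c)). split; [apply exp_pos|].
  intros t Htd. assert (0 < t) by (pose proof (exp_pos (ln K' / c)); lra).
  apply ln_increasing in Htd; [|apply exp_pos]. rewrite ln_exp in Htd.
  apply Rle_lt_trans with K'; auto.
  rewrite <- (exp_ln K') by lra. apply exp_increasing.
  apply Rmult_lt_compat_l with (r := c) in Htd; auto.
  replace (c * (ln K' / c)) with (ln K') in Htd by (field; lra). lra.
Qed.

Lemma exp_neg_small eps y : 0 < eps -> Rabs (ln eps) < y -> exp (- y) < eps.
Proof.
  intros He Hy. rewrite <- (exp_ln eps) by auto. apply exp_increasing.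
  pose proof (Rle_abs (- ln eps)). rewrite Rabs_Ropp in H. lra.
Qed.

Lemma cont_eps f x :
  (forall eps, 0 < eps -> exists d, 0 < d /\ forall y, Rabs (y - x) < d -> Rabs (f y - f x) < eps) ->
  continuous f x.
Proof.
  intros H P [eps HP]. destruct (H eps (cond_pos eps)) as [d [Hd Hd']].
  exists (mkposreal d Hd). intros y Hy. apply HP. apply Hd'. exact Hy.
Qed.

Lemma RInt_FTC G g a b : (forall x, 0 < x -> is_derive G x (g x)) -> C0 g ->
  0 < a -> 0 < b -> RInt g a b = G b - G a.
Proof.
  intros HD Hg Ha Hb. apply is_RInt_unique.
  apply (is_RInt_derive (V:=R_CompleteNormedModule) G g a b).
  + intros x [Hx _]. apply HD. eapply Rlt_le_trans; [|exact Hx]. apply Rmin_case; lra.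
  + intros x [Hx _]. apply Hg. eapply Rlt_le_trans; [|exact Hx]. apply Rmin_case; lra.
Qed.

Lemma IG_dom f g G L U : C0 f -> C0 g -> (forall x, 0 < x -> is_derive G x (g x)) ->
  (forall x, 0 < x -> L <= G x <= U) -> (forall x, 0 < x -> 0 <= f x <= g x) ->
  exists l, IG f l /\ forall a b, 0 < a -> a <= b -> RInt f a b <= l.
Proof.
  intros Hf Hg HD HB Hfg.
  destruct (IG_sup f (U - L)) as (l & H1 & _ & H3); auto.
  - intros x Hx; apply Hfg; auto.
  - intros a b Ha Hab. apply Rle_trans with (RInt g a b).
    + apply RInt_le; auto; try (apply C0_ex; auto; lra). intros x Hx; apply Hfg; lra.
    + rewrite (RInt_FTC G g); auto; try lra. pose proof (HB a Ha); pose proof (HB b ltac:(lra)); lra.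
  - exists l; auto.
Qed.

Lemma exp_m1 c t : 0 < t -> exp ((c - 1) * ln t) = exp (c * ln t) / t.
Proof.
  intros Ht. replace ((c - 1) * ln t) with (c * ln t + - ln t) by ring.
  rewrite exp_plus, exp_Ropp, exp_ln; auto.
Qed.

Ltac sc := repeat (match goal with |- _ /\ _ => split | |- True => exact I end);
  try lra; try (apply Rgt_not_eq; nra); try (apply Rgt_not_eq; lra).

Ltac c0tac := let x := fresh "x" in let Hx := fresh "Hx" in intros x Hx;
  apply (ex_derive_continuous (K:=R_AbsRing) (V:=R_NormedModule)); auto_derive.

Lemma IG_pos f l : C0 f -> IG f l -> (forall x, 0 < x -> 0 < f x) -> 0 < l.
Proof.
  intros Hf H Hp. apply Rlt_le_trans with (RInt f 1 2).
  - apply RInt_gt_0; try lra. intros; apply Hp; lra. intros; apply Hf; lra.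
  - apply IG_ge_part; auto; try lra. intros; left; auto.
Qed.

Lemma Gamma_big z : 1 < z -> exists l,
  IG (fun t => Rpower t (z - 1) * exp (- t)) l /\ 0 < l.
Proof.
  intros Hz. pose (q := z - 1). pose (C := exp (q * ln (2 * q))).
  assert (Hq : 0 < q) by (unfold q; lra).
  assert (HC : 0 < C) by apply exp_pos.
  assert (Hf : C0 (fun t => Rpower t (z - 1) * exp (- t))).
  { unfold Rpower. c0tac. lra. }
  destruct (IG_dom (fun t => Rpower t (z - 1) * exp (- t)) (fun t => C * exp (- t / 2))
     (fun t => - 2 * C * exp (- t / 2)) (- 2 * C) 0) as (l & Hl & _); auto.
  - c0tac. auto.
  - intros x Hx. auto_derive; auto. replace (exp (- x * / 2)) with (exp (- x / 2)) by (f_equal; field). field.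
  - intros x Hx. pose proof (exp_pos (- x / 2)). split.
    + assert (exp (- x / 2) <= exp 0) by (apply exp_le; lra). rewrite exp_0 in H0. nra.
    + nra.
  - intros x Hx. unfold Rpower. split.
    + pose proof (exp_pos ((z - 1) * ln x)); pose proof (exp_pos (- x)); nra.
    + pose proof (pw_bound q x Hq Hx). fold C in H. fold q.
      apply Rle_trans with (C * exp (x / 2) * exp (- x)).
      * apply Rmult_le_compat_r; auto. left; apply exp_pos.
      * rewrite Rmult_assoc, exp_pos_mul. right. f_equal. f_equal. field.
  - exists l. split; auto. apply (IG_pos _ _ Hf Hl).
    intros x Hx. unfold Rpower. pose proof (exp_pos ((z - 1) * ln x)); pose proof (exp_pos (- x)); nra.
Qed.

Lemma Y_le z t : 0 < z < 1 -> 0 < t -> exp (z * ln t) <= 1 + t.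
Proof.
  intros Hz Ht. destruct (Rle_or_lt (ln t) 0) as [H|H].
  - assert (exp (z * ln t) <= exp 0) by (apply exp_le; nra). rewrite exp_0 in H0. lra.
  - assert (exp (z * ln t) <= exp (ln t)) by (apply exp_le; nra). rewrite exp_ln in H0; lra.
Qed.

Lemma sq_exp t : 0 <= t -> (2 + t) ^ 2 <= 4 * exp t.
Proof.
  intros Ht. pose proof (exp_ineq1_le (t / 2)).
  assert (exp t = exp (t/2) * exp (t/2)) by (rewrite exp_pos_mul; f_equal; field).
  rewrite H0. nra.
Qed.

Lemma Gamma_small z : 0 < z < 1 -> exists l,
  IG (fun t => Rpower t (z - 1) * exp (- t)) l /\ 0 < l.
Proof.
  intros Hz.
  assert (Hf : C0 (fun t => Rpower t (z - 1) * exp (- t))).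
  { unfold Rpower. c0tac. lra. }
  destruct (IG_dom (fun t => Rpower t (z - 1) * exp (- t))
     (fun t => 4 * exp ((z - 1) * ln t) / (1 + exp (z * ln t)) ^ 2)
     (fun t => 4 / z * (exp (z * ln t) / (1 + exp (z * ln t)))) 0 (4 / z)) as (l & Hl & _); auto.
  - c0tac. pose proof (exp_pos (z * ln x)). sc.
  - intros x Hx. pose proof (exp_pos (z * ln x)). auto_derive.
    + sc.
    + rewrite exp_m1 by auto. field. sc.
  - intros x Hx. pose proof (exp_pos (z * ln x)). split.
    + apply Rmult_le_pos. left; apply Rdiv_lt_0_compat; lra. left; apply Rdiv_lt_0_compat; lra.
    + rewrite <- (Rmult_1_r (4 / z)) at 2. apply Rmult_le_compat_l.
      left; apply Rdiv_lt_0_compat; lra.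
      apply Rmult_le_reg_r with (1 + exp (z * ln x)); [lra|].
      unfold Rdiv. rewrite Rmult_assoc, Rinv_l; lra.
  - intros x Hx. unfold Rpower. pose proof (exp_pos ((z - 1) * ln x)). pose proof (exp_pos (- x)).
    pose proof (exp_pos (z * ln x)). split; [nra|].
    pose proof (Y_le z x Hz Hx). pose proof (sq_exp x ltac:(lra)).
    assert (Hq : (1 + exp (z * ln x)) ^ 2 <= 4 * exp x).
    { apply Rle_trans with ((2 + x) ^ 2); auto. apply pow_incr. lra. }
    assert (He : exp (- x) * exp x = 1) by (rewrite exp_pos_mul; replace (- x + x) with 0 by ring; apply exp_0).
    assert (exp (- x) * (1 + exp (z * ln x)) ^ 2 <= 4).
    { pose proof (exp_pos x). nra. }
    set (E := exp ((z - 1) * ln x)). set (Y := exp (z * ln x)) in *.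
    assert (0 < (1 + Y) ^ 2) by (apply pow_lt; lra).
    replace (E * exp (- x)) with ((E / (1 + Y) ^ 2) * (exp (- x) * (1 + Y) ^ 2)) by (field; lra).
    replace (4 * E / (1 + Y) ^ 2) with ((E / (1 + Y) ^ 2) * 4) by (field; lra).
    apply Rmult_le_compat_l; auto. left; apply Rdiv_lt_0_compat; auto.
  - exists l. split; auto. apply (IG_pos _ _ Hf Hl).
    intros x Hx. unfold Rpower. pose proof (exp_pos ((z - 1) * ln x)); pose proof (exp_pos (- x)); nra.
Qed.

Lemma expb u b : 0 < b -> exp u * b = exp (u + ln b).
Proof. intros Hb. rewrite exp_plus, exp_ln; auto. Qed.

Lemma exp_lin u v r : exp ((u + v) * ln r) = exp (u * ln r) * exp (v * ln r).
Proof. rewrite <- exp_plus. f_equal. ring. Qed.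

Lemma IG_eq f l l' : IG f l -> l = l' -> IG f l'.
Proof. intros H ->; auto. Qed.

Lemma E1 gam b G1 : 2 < gam -> 0 < b ->
  IG (fun t => Rpower t (1 - 2 / gam - 1) * exp (- t)) G1 ->
  IG (fun r => exp ((1 - gam) * ln r) * exp (- (b * exp (- gam * ln r))))
     (exp ((2 / gam - 1) * ln b) / gam * G1).
Proof.
  intros Hg Hb H.
  assert (H2 := IG_subst_dec (fun t => Rpower t (1 - 2 / gam - 1) * exp (- t))
    (fun r => b * exp (- gam * ln r)) (fun r => - b * gam * exp ((- gam - 1) * ln r)) G1).
  apply IG_scal with (k := exp ((2 / gam - 1) * ln b) / gam) in H2.
  - eapply IG_ext; [|exact H2]. intros r Hr. simpl. unfold Rpower.
    rewrite ln_mult, ln_exp; [|lra|apply exp_pos].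
    set (X := exp (- (b * exp (- gam * ln r)))).
    replace (exp ((2 / gam - 1) * ln b) / gam * (- (- b * gam * exp ((- gam - 1) * ln r)) *
      (exp ((1 - 2 / gam - 1) * (ln b + - gam * ln r)) * X)))
     with (exp ((2 / gam - 1) * ln b) * b * exp ((- gam - 1) * ln r) *
      exp ((1 - 2 / gam - 1) * (ln b + - gam * ln r)) * X) by (field; lra).
    rewrite expb by lra. rewrite !exp_pos_mul. f_equal. f_equal. field. lra.
  - unfold Rpower. c0tac. lra.
  - c0tac. lra.
  - intros x Hx. auto_derive. lra. rewrite exp_m1 by lra. field. lra.
  - intros x Hx. pose proof (exp_pos (- gam * ln x)). nra.
  - intros N. destruct (pow_big0 (- gam) ltac:(lra) (N / b)) as [d [Hd Hd']].
    exists d. split; auto. intros t Ht. specialize (Hd' t Ht).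
    apply Rmult_lt_compat_l with (r := b) in Hd'; auto.
    replace (b * (N / b)) with N in Hd' by (field; lra). lra.
  - intros d Hd. destruct (pow_smallinf (- gam) ltac:(lra) (d / b)) as [N [HN HN']].
    apply Rdiv_lt_0_compat; lra.
    exists N. intros t Ht. specialize (HN' t Ht).
    apply Rmult_lt_compat_l with (r := b) in HN'; auto.
    replace (b * (d / b)) with d in HN' by (field; lra). lra.
  - auto.
Qed.

Lemma pw1 c r : 0 < r -> exp ((1 + c) * ln r) = r * exp (c * ln r).
Proof. intros Hr. rewrite exp_lin, Rmult_1_l, exp_ln; auto. Qed.

Lemma E2 gam b : 2 < gam -> 0 < b ->
  IG (fun r => (1 - exp (- (b * exp (- gam * ln r)))) * r
        - b * gam / 2 * (exp ((1 - gam) * ln r) * exp (- (b * exp (- gam * ln r))))) 0.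
Proof.
  intros Hg Hb.
  apply IG_eq with (0 - 0); [|ring].
  apply IG_FTC with (G := fun r => r ^ 2 / 2 * (1 - exp (- (b * exp (- gam * ln r))))).
  - intros x Hx. auto_derive. lra.
    replace (1 - gam) with (1 + - gam) by ring. rewrite pw1 by lra. field. lra.
  - c0tac; lra.
  - intros eps He. exists (Rmin 1 eps). split.
    { apply Rmin_glb_lt; lra. }
    intros x [Hx Hxd]. pose proof (Rmin_l 1 eps). pose proof (Rmin_r 1 eps).
    pose proof (one_minus_exp (b * exp (- gam * ln x))).
    assert (0 <= b * exp (- gam * ln x)) by (pose proof (exp_pos (- gam * ln x)); nra).
    specialize (H1 H2).
    rewrite Rminus_0_r.
    pose proof (exp_pos (- (b * exp (- gam * ln x)))).
    assert (HY : 0 <= 1 - exp (- (b * exp (- gam * ln x))) <= 1) by lra.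
    set (Y := 1 - exp (- (b * exp (- gam * ln x)))) in *.
    rewrite Rabs_right by (apply Rle_ge; apply Rmult_le_pos; [nra|lra]).
    assert (x ^ 2 / 2 * Y <= x ^ 2 / 2) by (rewrite <- (Rmult_1_r (x ^ 2 / 2)) at 2; apply Rmult_le_compat_l; nra).
    nra.
  - intros eps He.
    destruct (pow_smallinf (2 - gam) ltac:(lra) (2 * eps / b)) as [N [HN HN']].
    apply Rdiv_lt_0_compat; lra.
    exists N. intros x Hx. specialize (HN' x Hx).
    assert (Hx0 : 0 < x) by lra.
    pose proof (one_minus_exp (b * exp (- gam * ln x))).
    assert (0 <= b * exp (- gam * ln x)) by (pose proof (exp_pos (- gam * ln x)); nra).
    specialize (H H0).
    replace (2 - gam) with (1 + (1 + - gam)) in HN' by ring.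
    rewrite !pw1 in HN' by lra.
    rewrite Rminus_0_r, Rabs_right by nra.
    apply Rmult_lt_compat_l with (r := b) in HN'; auto.
    replace (b * (2 * eps / b)) with (2 * eps) in HN' by (field; lra).
    assert (x ^ 2 / 2 * (1 - exp (- (b * exp (- gam * ln x)))) <= x ^ 2 / 2 * (b * exp (- gam * ln x))).
    { apply Rmult_le_compat_l; [nra|lra]. }
    nra.
Qed.

Lemma Eint gam b G1 : 2 < gam -> 0 < b ->
  IG (fun t => Rpower t (1 - 2 / gam - 1) * exp (- t)) G1 ->
  IG (fun r => (1 - exp (- (b * exp (- gam * ln r)))) * r) (exp (2 / gam * ln b) * G1 / 2).
Proof.
  intros Hg Hb H.
  pose proof (IG_plus _ _ _ _ (E2 gam b Hg Hb) (IG_scal _ _ (b * gam / 2) (E1 gam b G1 Hg Hb H))) as H3.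
  eapply IG_eq.
  - eapply IG_ext; [|exact H3]. intros r Hr. simpl. ring.
  - rewrite exp_m1 by lra. field. lra.
Qed.

Lemma Dint gam s a : 2 < gam -> 0 < s -> 0 < a ->
  IG (fun r => s * gam ^ 2 * exp ((- gam - 1) * ln r) * exp (- (s * a * exp (- gam * ln r)))) (gam / a).
Proof.
  intros Hg Hs Ha.
  apply IG_eq with (gam / a - 0); [|ring].
  apply IG_FTC with (G := fun r => gam / a * exp (- (s * a * exp (- gam * ln r)))).
  - intros x Hx. auto_derive. lra. rewrite exp_m1 by lra. field. lra.
  - c0tac; lra.
  - intros eps He.
    set (e' := eps * a / gam).
    assert (He' : 0 < e') by (unfold e'; apply Rdiv_lt_0_compat; nra).
    destruct (pow_big0 (- gam) ltac:(lra) (Rabs (ln e') / (s * a))) as [d [Hd Hd']].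
    exists d. split; auto. intros x Hx. specialize (Hd' x Hx).
    apply Rmult_lt_compat_l with (r := s * a) in Hd'; [|nra].
    replace (s * a * (Rabs (ln e') / (s * a))) with (Rabs (ln e')) in Hd' by (field; nra).
    pose proof (exp_neg_small e' _ He' Hd').
    pose proof (exp_pos (- (s * a * exp (- gam * ln x)))).
    rewrite Rminus_0_r, Rabs_right.
    + apply Rmult_lt_compat_l with (r := gam / a) in H; [|apply Rdiv_lt_0_compat; lra].
      unfold e' in H. replace (gam / a * (eps * a / gam)) with eps in H by (field; lra). lra.
    + apply Rle_ge. apply Rmult_le_pos; [left; apply Rdiv_lt_0_compat; lra|lra].
  - intros eps He.
    destruct (pow_smallinf (- gam) ltac:(lra) (eps / (gam * s))) as [N [HN HN']].
    apply Rdiv_lt_0_compat; nra.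
    exists N. intros x Hx. specialize (HN' x Hx).
    pose proof (exp_pos (- gam * ln x)).
    pose proof (one_minus_exp (s * a * exp (- gam * ln x)) ltac:(apply Rmult_le_pos; [nra|lra])).
    replace (gam / a * exp (- (s * a * exp (- gam * ln x))) - gam / a)
      with (- (gam / a * (1 - exp (- (s * a * exp (- gam * ln x)))))) by ring.
    rewrite Rabs_Ropp, Rabs_right.
    + apply Rle_lt_trans with (gam / a * (s * a * exp (- gam * ln x))).
      * apply Rmult_le_compat_l; [left; apply Rdiv_lt_0_compat; lra|lra].
      * replace (gam / a * (s * a * exp (- gam * ln x))) with ((gam * s) * exp (- gam * ln x)) by (field; lra).
        apply Rmult_lt_compat_l with (r := gam * s) in HN'; [|nra].
        replace (gam * s * (eps / (gam * s))) with eps in HN' by (field; nra). lra.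
    + apply Rle_ge. apply Rmult_le_pos; [left; apply Rdiv_lt_0_compat; lra|lra].
Qed.

Lemma J1 gam m G2 : 2 < gam -> 0 < m ->
  IG (fun t => Rpower t (1 + gam / 2 - 1) * exp (- t)) G2 ->
  IG (fun s => exp (2 / gam * ln s) * exp (- (m * exp (2 / gam * ln s))))
     (exp (- (gam / 2) * ln m) / (m * (2 / gam)) * G2).
Proof.
  intros Hg Hm H.
  assert (H2 := IG_subst_inc (fun t => Rpower t (1 + gam / 2 - 1) * exp (- t))
    (fun s => m * exp (2 / gam * ln s)) (fun s => m * (2 / gam) * exp ((2 / gam - 1) * ln s)) G2).
  apply IG_scal with (k := exp (- (gam / 2) * ln m) / (m * (2 / gam))) in H2.
  - eapply IG_ext; [|exact H2]. intros r Hr. simpl. unfold Rpower.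
    rewrite ln_mult, ln_exp; [|lra|apply exp_pos].
    set (X := exp (- (m * exp (2 / gam * ln r)))).
    replace (exp (- (gam / 2) * ln m) / (m * (2 / gam)) *
      (m * (2 / gam) * exp ((2 / gam - 1) * ln r) *
      (exp ((1 + gam / 2 - 1) * (ln m + 2 / gam * ln r)) * X)))
     with (exp (- (gam / 2) * ln m) * exp ((2 / gam - 1) * ln r) *
      exp ((1 + gam / 2 - 1) * (ln m + 2 / gam * ln r)) * X) by (field; lra).
    rewrite !exp_pos_mul. f_equal. f_equal. field. lra.
  - unfold Rpower. c0tac. lra.
  - c0tac. lra.
  - intros x Hx. auto_derive. lra. rewrite exp_m1 by lra. field. lra.
  - intros x Hx. pose proof (exp_pos (2 / gam * ln x)). nra.
  - intros d Hd. destruct (pow_small0 (2 / gam) ltac:(apply Rdiv_lt_0_compat; lra) (d / m)) as [e [He He']].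
    apply Rdiv_lt_0_compat; lra.
    exists e. split; auto. intros t Ht. specialize (He' t Ht).
    apply Rmult_lt_compat_l with (r := m) in He'; auto.
    replace (m * (d / m)) with d in He' by (field; lra). lra.
  - intros N. destruct (pow_biginf (2 / gam) ltac:(apply Rdiv_lt_0_compat; lra) (N / m)) as [M [HM HM']].
    exists M. intros t Ht. specialize (HM' t Ht).
    apply Rmult_lt_compat_l with (r := m) in HM'; auto.
    replace (m * (N / m)) with N in HM' by (field; lra). lra.
  - auto.
Qed.

Lemma J2 gam m : 2 < gam -> 0 < m ->
  IG (fun s => exp (- (m * exp (2 / gam * ln s)))
        - m * (2 / gam) * (exp (2 / gam * ln s) * exp (- (m * exp (2 / gam * ln s))))) 0.
Proof.
  intros Hg Hm.
  apply IG_eq with (0 - 0); [|ring].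
  apply IG_FTC with (G := fun s => s * exp (- (m * exp (2 / gam * ln s)))).
  - intros x Hx. auto_derive. lra. field. lra.
  - c0tac; lra.
  - intros eps He. exists eps. split; auto.
    intros x [Hx Hxd]. rewrite Rminus_0_r.
    pose proof (exp_pos (2 / gam * ln x)).
    assert (exp (- (m * exp (2 / gam * ln x))) <= 1).
    { rewrite <- exp_0. apply exp_le. nra. }
    pose proof (exp_pos (- (m * exp (2 / gam * ln x)))).
    rewrite Rabs_right by nra. nra.
  - intros eps He.
    set (q := gam / 2).
    set (C := exp (- q * ln m) * exp (q * ln (2 * q))).
    assert (HC : 0 < C) by (unfold C; pose proof (exp_pos (- q * ln m)); pose proof (exp_pos (q * ln (2 * q))); nra).
    assert (Hq : 0 < q) by (unfold q; lra).
    destruct (pow_biginf (2 / gam) ltac:(apply Rdiv_lt_0_compat; lra) (2 * Rabs (ln (eps / C)) / m)) as [N [HN HN']].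
    exists N. intros x Hx. specialize (HN' x Hx). assert (Hx0 : 0 < x) by lra.
    set (y := m * exp (2 / gam * ln x)).
    assert (Hy : 0 < y) by (unfold y; pose proof (exp_pos (2 / gam * ln x)); nra).
    assert (Hyb : 2 * Rabs (ln (eps / C)) < y).
    { unfold y. apply Rmult_lt_compat_l with (r := m) in HN'; auto.
      replace (m * (2 * Rabs (ln (eps / C)) / m)) with (2 * Rabs (ln (eps / C))) in HN' by (field; lra). lra. }
    assert (Hxy : x = exp (- q * ln m) * exp (q * ln y)).
    { unfold y. rewrite ln_mult, ln_exp by (try lra; apply exp_pos).
      rewrite exp_pos_mul. rewrite <- (exp_ln x) at 1 by lra. f_equal. unfold q. field. lra. }
    rewrite Rminus_0_r. fold y.
    pose proof (exp_pos (- y)).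
    rewrite Rabs_right by nra.
    pose proof (pw_bound q y Hq Hy).
    assert (x * exp (- y) <= C * exp (- (y / 2))).
    { rewrite Hxy. unfold C.
      apply Rle_trans with (exp (- q * ln m) * (exp (q * ln (2 * q)) * exp (y / 2)) * exp (- y)).
      - apply Rmult_le_compat_r; [lra|]. apply Rmult_le_compat_l; [left; apply exp_pos|lra].
      - right. rewrite !Rmult_assoc. f_equal. f_equal. rewrite exp_pos_mul. f_equal. field. }
    assert (exp (- (y / 2)) < eps / C).
    { apply exp_neg_small. apply Rdiv_lt_0_compat; lra. lra. }
    apply Rmult_lt_compat_l with (r := C) in H2; auto.
    replace (C * (eps / C)) with eps in H2 by (field; lra). lra.
Qed.

Lemma Jint gam m G2 : 2 < gam -> 0 < m ->
  IG (fun t => Rpower t (1 + gam / 2 - 1) * exp (- t)) G2 ->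
  IG (fun s => exp (- (m * exp (2 / gam * ln s)))) (exp (- (gam / 2) * ln m) * G2).
Proof.
  intros Hg Hm H.
  pose proof (IG_plus _ _ _ _ (J2 gam m Hg Hm) (IG_scal _ _ (m * (2 / gam)) (J1 gam m G2 Hg Hm H))) as H3.
  eapply IG_eq.
  - eapply IG_ext; [|exact H3]. intros r Hr. simpl. ring.
  - field. lra.
Qed.

Lemma scal_pt s t G : 0 < s -> s <= t -> 0 <= G ->
  1 - exp (- s * G) <= 1 - exp (- t * G) <= t / s * (1 - exp (- s * G)).
Proof.
  intros Hs Hst HG. split.
  - assert (exp (- t * G) <= exp (- s * G)) by (apply exp_le; nra). lra.
  - set (u := s * G). set (w := (t - s) * G).
    assert (Hu : 0 <= u) by (unfold u; nra). assert (Hw : 0 <= w) by (unfold w; nra).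
    set (A := exp (- s * G)).
    assert (HA : 0 < A) by apply exp_pos.
    assert (HAe : A * exp u = 1).
    { unfold A, u. rewrite exp_pos_mul. replace (- s * G + s * G) with 0 by ring. apply exp_0. }
    pose proof (exp_ineq1_le u).
    assert (HAu : A * u <= 1 - A) by nra.
    assert (Ht : exp (- t * G) = A * exp (- w)).
    { unfold A, w. rewrite exp_pos_mul. f_equal. ring. }
    rewrite Ht. pose proof (one_minus_exp w Hw).
    assert (Hwu : w = (t - s) / s * u) by (unfold w, u; field; lra).
    assert (1 - A * exp (- w) <= (1 - A) + A * w) by nra.
    assert (A * w <= (t - s) / s * (1 - A)).
    { rewrite Hwu. replace (A * ((t - s) / s * u)) with ((t - s) / s * (A * u)) by ring.
      apply Rmult_le_compat_l; auto. apply Rdiv_le_0_compat; lra. }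
    replace (t / s * (1 - A)) with ((1 - A) + (t - s) / s * (1 - A)) by (field; lra).
    lra.
Qed.

Lemma gfun_pos gam c We r : 0 < c -> 0 < We -> 0 < r -> 0 < gfun gam c We r.
Proof.
  intros Hc HW Hr. unfold gfun, Rpower. apply Rmult_lt_0_compat; [apply exp_pos|].
  assert (0 < 4 * We / c ^ 2 * r ^ 2).
  { apply Rmult_lt_0_compat; [apply Rdiv_lt_0_compat; [lra|apply pow_lt; lra]|apply pow_lt; lra]. }
  pose proof (pow2_ge_0 gam). lra.
Qed.

Lemma Zpt gam c We s r : 2 < gam -> 0 < c -> 0 < We -> 0 < s -> 0 < r ->
  let a := 4 * We / c ^ 2 in
  (1 - exp (- (s * a * exp (- gam * ln r)))) * r < (1 - exp (- s * gfun gam c We r)) * r /\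
  (1 - exp (- s * gfun gam c We r)) * r <=
  (1 - exp (- (s * a * exp (- gam * ln r)))) * r
  + s * gam ^ 2 * exp ((- gam - 1) * ln r) * exp (- (s * a * exp (- gam * ln r))).
Proof.
  intros Hg Hc HW Hs Hr a.
  assert (Ha : 0 < a) by (unfold a; apply Rdiv_lt_0_compat; [lra|apply pow_lt; lra]).
  set (x := s * a * exp (- gam * ln r)).
  set (y := s * gam ^ 2 * exp ((- gam - 2) * ln r)).
  assert (Hx : 0 <= x) by (unfold x; pose proof (exp_pos (- gam * ln r)); apply Rmult_le_pos; nra).
  assert (Hy : 0 < y).
  { unfold y. apply Rmult_lt_0_compat; [apply Rmult_lt_0_compat; [lra|apply pow_lt; lra]|apply exp_pos]. }
  assert (Hyr : y * r = s * gam ^ 2 * exp ((- gam - 1) * ln r)).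
  { unfold y. replace (- gam - 2) with ((- gam - 1) - 1) by ring. rewrite exp_m1 by lra. field. lra. }
  assert (Hsg : - s * gfun gam c We r = - x + - y).
  { unfold x, y, a, gfun, Rpower.
    replace (- gam - 2) with ((- gam - 1) - 1) by ring. rewrite !exp_m1 by lra.
    field. lra. }
  rewrite Hsg, exp_plus. fold x.
  pose proof (exp_pos (- x)). pose proof (exp_pos (- y)).
  assert (exp (- y) < 1) by (rewrite <- exp_0; apply exp_increasing; lra).
  pose proof (one_minus_exp y ltac:(lra)).
  split.
  - apply Rmult_lt_compat_r; auto. nra.
  - rewrite <- Hyr.
    assert (exp (- x) * (1 - exp (- y)) <= exp (- x) * y) by (apply Rmult_le_compat_l; lra).
    assert (r * (exp (- x) * (1 - exp (- y))) <= r * (exp (- x) * y)) by (apply Rmult_le_compat_l; lra).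
    nra.
Qed.

Lemma Zprops gam c We s G1 : 2 < gam -> 0 < c -> 0 < We -> 0 < s ->
  IG (fun t => Rpower t (1 - 2 / gam - 1) * exp (- t)) G1 ->
  IG (fun r => (1 - exp (- s * gfun gam c We r)) * r) (Zfun gam c We s) /\
  exp (2 / gam * ln (s * (4 * We / c ^ 2))) * G1 / 2 < Zfun gam c We s /\
  Zfun gam c We s <= exp (2 / gam * ln (s * (4 * We / c ^ 2))) * G1 / 2 + gam / (4 * We / c ^ 2).
Proof.
  intros Hg Hc HW Hs HG1.
  set (a := 4 * We / c ^ 2).
  assert (Ha : 0 < a) by (unfold a; apply Rdiv_lt_0_compat; [lra|apply pow_lt; lra]).
  pose proof (Eint gam (s * a) G1 Hg ltac:(nra) HG1) as HE.
  pose proof (Dint gam s a Hg Hs Ha) as HD.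
  pose proof (IG_plus _ _ _ _ HE HD) as HED.
  assert (CZ : C0 (fun r => (1 - exp (- s * gfun gam c We r)) * r)).
  { unfold gfun, Rpower. c0tac. lra. }
  assert (CE : C0 (fun r => (1 - exp (- (s * a * exp (- gam * ln r)))) * r)).
  { c0tac. lra. }
  assert (CD : C0 (fun r => s * gam ^ 2 * exp ((- gam - 1) * ln r) * exp (- (s * a * exp (- gam * ln r))))).
  { c0tac. lra. }
  assert (CED : C0 (fun r => (1 - exp (- (s * a * exp (- gam * ln r)))) * r +
     s * gam ^ 2 * exp ((- gam - 1) * ln r) * exp (- (s * a * exp (- gam * ln r))))).
  { c0tac. lra. }
  assert (HZ0 : forall r, 0 < r -> 0 <= (1 - exp (- s * gfun gam c We r)) * r).
  { intros r Hr. pose proof (gfun_pos gam c We r Hc HW Hr).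
    pose proof (one_minus_exp (s * gfun gam c We r) ltac:(nra)).
    replace (- s * gfun gam c We r) with (- (s * gfun gam c We r)) by ring. nra. }
  assert (HE0 : forall r, 0 < r -> 0 <= (1 - exp (- (s * a * exp (- gam * ln r)))) * r).
  { intros r Hr. pose proof (exp_pos (- gam * ln r)).
    pose proof (one_minus_exp (s * a * exp (- gam * ln r)) ltac:(apply Rmult_le_pos; nra)). nra. }
  assert (HD0 : forall r, 0 < r -> 0 <= s * gam ^ 2 * exp ((- gam - 1) * ln r) * exp (- (s * a * exp (- gam * ln r)))).
  { intros r Hr. apply Rmult_le_pos; [apply Rmult_le_pos; [apply Rmult_le_pos; [lra|apply pow_le; lra]|]|]; left; apply exp_pos. }
  destruct (IG_sup (fun r => (1 - exp (- s * gfun gam c We r)) * r)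
    (exp (2 / gam * ln (s * a)) * G1 / 2 + gam / a)) as (z & Hz & _); auto.
  - intros x y Hx Hxy.
    apply Rle_trans with (RInt (fun r => (1 - exp (- (s * a * exp (- gam * ln r)))) * r +
      s * gam ^ 2 * exp ((- gam - 1) * ln r) * exp (- (s * a * exp (- gam * ln r)))) x y).
    + apply RInt_le; [lra | apply C0_ex; auto; lra | apply C0_ex; auto; lra | ].
      intros r Hr. apply (Zpt gam c We s r); auto; lra.
    + apply (IG_ge_part _ _ CED HED); auto. intros r Hr. pose proof (HE0 r Hr); pose proof (HD0 r Hr). lra.
  - assert (HZ : Zfun gam c We s = z) by (unfold Zfun; apply IG_unique; auto).
    rewrite HZ. split; auto. split.
    + apply (IG_lt _ _ _ _ CE CZ HE Hz). intros r Hr. apply (Zpt gam c We s r); auto.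
    + apply (IG_le _ _ _ _ CZ CED Hz HED). intros r Hr. apply (Zpt gam c We s r); auto.
Qed.

Lemma Zscale gam c We G1 s t : 2 < gam -> 0 < c -> 0 < We -> 0 < s -> s <= t ->
  IG (fun t => Rpower t (1 - 2 / gam - 1) * exp (- t)) G1 ->
  Zfun gam c We s <= Zfun gam c We t <= t / s * Zfun gam c We s.
Proof.
  intros Hg Hc HW Hs Hst HG1.
  destruct (Zprops gam c We s G1 Hg Hc HW Hs HG1) as [Hzs _].
  destruct (Zprops gam c We t G1 Hg Hc HW ltac:(lra) HG1) as [Hzt _].
  assert (CZ : forall u, C0 (fun r => (1 - exp (- u * gfun gam c We r)) * r)).
  { intros u. unfold gfun, Rpower. c0tac. lra. }
  split.
  - apply (IG_le _ _ _ _ (CZ s) (CZ t) Hzs Hzt). intros r Hr.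
    pose proof (gfun_pos gam c We r Hc HW Hr).
    pose proof (scal_pt s t (gfun gam c We r) Hs Hst ltac:(lra)).
    apply Rmult_le_compat_r; lra.
  - apply (IG_le (fun r => (1 - exp (- t * gfun gam c We r)) * r)
      (fun r => t / s * ((1 - exp (- s * gfun gam c We r)) * r))
      (Zfun gam c We t) (t / s * Zfun gam c We s)); [apply CZ | | exact Hzt | |].
    + intros x Hx. apply (continuous_scal_r (K:=R_AbsRing) (V:=R_NormedModule) (t / s)). apply CZ; auto.
    + apply IG_scal; auto.
    + intros r Hr. pose proof (gfun_pos gam c We r Hc HW Hr).
      pose proof (scal_pt s t (gfun gam c We r) Hs Hst ltac:(lra)).
      rewrite <- Rmult_assoc. apply Rmult_le_compat_r; lra.
Qed.

Lemma Zcont gam c We G1 s0 : 2 < gam -> 0 < c -> 0 < We -> 0 < s0 ->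
  IG (fun t => Rpower t (1 - 2 / gam - 1) * exp (- t)) G1 ->
  continuous (Zfun gam c We) s0.
Proof.
  intros Hg Hc HW Hs HG1. apply cont_eps. intros eps He.
  set (Z0 := Zfun gam c We s0).
  assert (HZ0 : 0 <= Z0).
  { destruct (Zprops gam c We s0 G1 Hg Hc HW Hs HG1) as (_ & H1 & _).
    fold Z0 in H1. eapply Rle_trans; [|left; exact H1].
    apply Rmult_le_pos; [|lra]. apply Rmult_le_pos; [left; apply exp_pos|].
    assert (Cf : C0 (fun t => Rpower t (1 - 2 / gam - 1) * exp (- t))) by (unfold Rpower; c0tac; lra).
    left. apply (IG_pos _ G1 Cf HG1).
    intros x Hx; unfold Rpower; pose proof (exp_pos ((1 - 2 / gam - 1) * ln x)); pose proof (exp_pos (- x)); nra. }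
  set (d := Rmin (s0 / 2) (eps * s0 / (2 * (Z0 + 1)))).
  assert (Hd1 : d <= s0 / 2) by apply Rmin_l.
  assert (Hd2 : d <= eps * s0 / (2 * (Z0 + 1))) by apply Rmin_r.
  assert (Hd : 0 < d).
  { apply Rmin_glb_lt; [lra|]. apply Rdiv_lt_0_compat; nra. }
  exists d. split; auto. intros y Hy. apply Rabs_def2 in Hy.
  assert (Hkey : d * (2 * Z0 / s0) < eps).
  { apply Rle_lt_trans with (eps * s0 / (2 * (Z0 + 1)) * (2 * Z0 / s0)).
    - apply Rmult_le_compat_r; auto. apply Rdiv_le_0_compat; lra.
    - replace (eps * s0 / (2 * (Z0 + 1)) * (2 * Z0 / s0)) with (eps * (Z0 / (Z0 + 1))) by (field; lra).
      assert (Z0 / (Z0 + 1) < 1) by (apply Rmult_lt_reg_r with (Z0 + 1); [lra|]; unfold Rdiv; rewrite Rmult_assoc, Rinv_l; lra).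
      nra. }
  destruct (Rle_or_lt s0 y) as [H|H].
  - destruct (Zscale gam c We G1 s0 y Hg Hc HW Hs H HG1) as [H1 H2]. fold Z0 in H1, H2.
    apply Rabs_def1.
    + replace (y / s0 * Z0) with (Z0 + (y - s0) / s0 * Z0) in H2 by (field; lra).
      assert ((y - s0) / s0 * Z0 <= d * (2 * Z0 / s0)).
      { replace ((y - s0) / s0 * Z0) with ((y - s0) * (Z0 / s0)) by (field; lra).
        replace (d * (2 * Z0 / s0)) with (d * 2 * (Z0 / s0)) by (field; lra).
        apply Rmult_le_compat_r; [apply Rdiv_le_0_compat; lra|lra]. }
      lra.
    + lra.
  - destruct (Zscale gam c We G1 y s0 Hg Hc HW ltac:(lra) ltac:(lra) HG1) as [H1 H2]. fold Z0 in H1, H2.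
    apply Rabs_def1; [lra|].
    assert (Hy0 : 0 < y) by lra.
    assert (Zfun gam c We y * (s0 / y) >= Z0) by (rewrite Rmult_comm; lra).
    assert (Z0 - Zfun gam c We y <= (s0 - y) / y * Z0).
    { replace ((s0 - y) / y * Z0) with (s0 / y * Z0 - Z0) by (field; lra).
      assert (Hsy : 0 <= s0 / y - 1).
      { assert (1 <= s0 / y); [|lra]. apply Rmult_le_reg_r with y; auto.
        unfold Rdiv; rewrite Rmult_assoc, Rinv_l; lra. }
      assert ((s0 / y - 1) * Zfun gam c We y <= (s0 / y - 1) * Z0) by (apply Rmult_le_compat_l; lra).
      lra. }
    assert ((s0 - y) / y * Z0 <= d * (2 * Z0 / s0)).
    { replace ((s0 - y) / y * Z0) with ((s0 - y) * (Z0 / y)) by (field; lra).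
      replace (d * (2 * Z0 / s0)) with (d * (Z0 / (s0 / 2))) by (field; lra).
      apply Rmult_le_compat; try lra. apply Rdiv_le_0_compat; lra.
      unfold Rdiv. apply Rmult_le_compat_l; auto. apply Rinv_le_contravar; lra. }
    lra.
Qed.

Lemma master lam gam c rho We : 0 < lam -> 2 < gam -> 0 < c -> 0 < rho -> 0 < We ->
  0 < CRB_LBW lam gam c rho We /\
  (1 - PI * lam * c ^ 2 * gam / (2 * We)) * CRB_LBW lam gam c rho We < CRB_LB lam gam c rho We /\
  CRB_LB lam gam c rho We < CRB_LBW lam gam c rho We.
Proof.
  intros Hl Hg Hc Hr HW.
  assert (Hz1 : 0 < 1 - 2 / gam < 1).
  { split; [|assert (0 < 2 / gam) by (apply Rdiv_lt_0_compat; lra); lra].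
    assert (2 / gam < 1); [|lra]. apply Rmult_lt_reg_r with gam; [lra|].
    unfold Rdiv; rewrite Rmult_assoc, Rinv_l; lra. }
  destruct (Gamma_small (1 - 2 / gam) Hz1) as [G1 [HG1 HG1p]].
  destruct (Gamma_big (1 + gam / 2) ltac:(assert (0 < gam / 2) by (apply Rdiv_lt_0_compat; lra); lra)) as [G2 [HG2 HG2p]].
  assert (EG1 : Gamma (1 - 2 / gam) = G1) by (unfold Gamma; apply IG_unique; auto).
  assert (EG2 : Gamma (1 + gam / 2) = G2) by (unfold Gamma; apply IG_unique; auto).
  pose proof PI_RGT_0 as HPI.
  set (a := 4 * We / c ^ 2).
  assert (Ha : 0 < a) by (unfold a; apply Rdiv_lt_0_compat; [lra|apply pow_lt; lra]).
  set (m := 2 * PI * lam * (exp (2 / gam * ln a) * G1 / 2)).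
  assert (Hm : 0 < m).
  { unfold m. pose proof (exp_pos (2 / gam * ln a)).
    apply Rmult_lt_0_compat; [nra|]. apply Rdiv_lt_0_compat; [nra|lra]. }
  pose proof (Jint gam m G2 Hg Hm HG2) as HJ.
  set (J := exp (- (gam / 2) * ln m) * G2) in HJ.
  assert (HJp : 0 < J) by (unfold J; pose proof (exp_pos (- (gam / 2) * ln m)); nra).
  set (F := fun s => exp (- 2 * PI * lam * Zfun gam c We s)).
  set (Jf := fun s => exp (- (m * exp (2 / gam * ln s)))).
  assert (CF : C0 F).
  { intros x Hx. unfold F.
    apply (continuous_comp (Zfun gam c We) (fun z => exp (- 2 * PI * lam * z))).
    - apply (Zcont gam c We G1); auto.
    - apply (ex_derive_continuous (K:=R_AbsRing) (V:=R_NormedModule)). auto_derive. auto. }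
  assert (CJ : C0 Jf) by (unfold Jf; c0tac; lra).
  assert (Hpt : forall s, 0 < s ->
     F s < Jf s /\ exp (- (2 * PI * lam * (gam / a))) * Jf s <= F s).
  { intros s Hs. destruct (Zprops gam c We s G1 Hg Hc HW Hs HG1) as (_ & H1 & H2).
    fold a in H1, H2.
    assert (HE : exp (2 / gam * ln (s * a)) * G1 / 2 * (2 * PI * lam) = m * exp (2 / gam * ln s)).
    { unfold m. rewrite ln_mult by lra.
      replace (2 / gam * (ln s + ln a)) with (2 / gam * ln s + 2 / gam * ln a) by ring.
      rewrite exp_plus. field. }
    unfold F, Jf. split.
    - apply exp_increasing. rewrite <- HE.
      assert (0 < 2 * PI * lam) by nra. nra.
    - rewrite exp_pos_mul. apply exp_le. rewrite <- HE.
      assert (0 < 2 * PI * lam) by nra. nra. }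
  assert (HJf0 : forall s, 0 < s -> 0 <= Jf s) by (intros; left; apply exp_pos).
  destruct (IG_sup F J) as (L & HL & _); auto.
  - intros; left; apply exp_pos.
  - intros x y Hx Hxy. apply Rle_trans with (RInt Jf x y).
    + apply RInt_le; [lra | apply C0_ex; auto; lra | apply C0_ex; auto; lra | ].
      intros r Hr0. left. apply Hpt. lra.
    + apply (IG_ge_part _ _ CJ HJ); auto.
  - assert (ELB : CRB_LB lam gam c rho We = 4 / rho * L).
    { unfold CRB_LB. f_equal. apply IG_unique. exact HL. }
    assert (EW : CRB_LBW lam gam c rho We = 4 / rho * J).
    { unfold CRB_LBW. rewrite EG1, EG2. unfold Rpower, J.
      assert (Em : m = (PI * lam) * exp (2 / gam * ln a) * G1) by (unfold m; field).
      rewrite Em. rewrite !ln_mult, ln_exp; try nra; try apply exp_pos.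
      replace (- (gam / 2) * (ln PI + ln lam + 2 / gam * ln a + ln G1))
        with (- gam / 2 * (ln PI + ln lam) + - ln a + - gam / 2 * ln G1) by (field; lra).
      rewrite !exp_plus, exp_Ropp, exp_ln by lra.
      unfold a. field. repeat split; lra. }
    assert (HLJ : L < J).
    { apply (IG_lt _ _ _ _ CF CJ HL HJ). intros s Hs; apply Hpt; auto. }
    assert (HLJ2 : exp (- (2 * PI * lam * (gam / a))) * J <= L).
    { apply (IG_le (fun s => exp (- (2 * PI * lam * (gam / a))) * Jf s) F); auto.
      - intros x Hx. apply (continuous_scal_r (K:=R_AbsRing) (V:=R_NormedModule)). apply CJ; auto.
      - apply IG_scal; auto.
      - intros s Hs; apply Hpt; auto. }
    assert (Hx : 2 * PI * lam * (gam / a) = PI * lam * c ^ 2 * gam / (2 * We)).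
    { unfold a. field. lra. }
    rewrite Hx in HLJ2.
    set (x := PI * lam * c ^ 2 * gam / (2 * We)) in *.
    assert (Hx0 : 0 < x).
    { unfold x. apply Rdiv_lt_0_compat; [|lra].
      apply Rmult_lt_0_compat; [|lra]. apply Rmult_lt_0_compat; [nra|apply pow_lt; lra]. }
    pose proof (exp_ineq1 (- x) ltac:(lra)).
    rewrite ELB, EW.
    assert (H4 : 0 < 4 / rho) by (apply Rdiv_lt_0_compat; lra).
    split; [nra|]. split; [|nra].
    assert ((1 - x) * J < L) by nra. nra.
Qed.

Lemma ratio_bound lam gam c rho We : 0 < lam -> 2 < gam -> 0 < c -> 0 < rho -> 0 < We ->
  Rabs (CRB_LB lam gam c rho We / CRB_LBW lam gam c rho We - 1) < (PI * lam * c ^ 2 * gam / 2) / We.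
Proof.
  intros Hl Hg Hc Hr HW.
  destruct (master lam gam c rho We Hl Hg Hc Hr HW) as (H0 & H1 & H2).
  set (W := CRB_LBW lam gam c rho We) in *. set (L := CRB_LB lam gam c rho We) in *.
  replace (PI * lam * c ^ 2 * gam / (2 * We)) with ((PI * lam * c ^ 2 * gam / 2) / We) in H1 by (field; lra).
  set (C := PI * lam * c ^ 2 * gam / 2 / We) in *.
  assert (L / W < 1).
  { apply Rmult_lt_reg_r with W; auto. unfold Rdiv; rewrite Rmult_assoc, Rinv_l; lra. }
  assert (1 - C < L / W).
  { apply Rmult_lt_reg_r with W; auto. unfold Rdiv; rewrite Rmult_assoc, Rinv_l; lra. }
  apply Rabs_def1; lra.
Qed.

Theorem corollary1 (lam gam c rho : R) :
  0 < lam -> 2 < gam -> 0 < c -> 0 < rho ->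
  (forall We : R, 0 < We ->
     (1 - PI * lam * c ^ 2 * gam / (2 * We)) * CRB_LBW lam gam c rho We
       < CRB_LB lam gam c rho We
     /\ CRB_LB lam gam c rho We < CRB_LBW lam gam c rho We)
  /\ filterlim (fun We => CRB_LB lam gam c rho We / CRB_LBW lam gam c rho We)
       (Rbar_locally p_infty) (locally 1)
  /\ (exists K : R, forall We : R, 0 < We ->
       Rabs (CRB_LB lam gam c rho We / CRB_LBW lam gam c rho We - 1) <= K / We).
Proof.
  intros Hl Hg Hc Hr.
  pose proof PI_RGT_0 as HPI.
  set (C := PI * lam * c ^ 2 * gam / 2).
  assert (HC : 0 < C).
  { unfold C. apply Rdiv_lt_0_compat; [|lra].
    apply Rmult_lt_0_compat; [|lra]. apply Rmult_lt_0_compat; [nra|apply pow_lt; lra]. }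
  split; [|split].
  - intros We HW. destruct (master lam gam c rho We Hl Hg Hc Hr HW) as (_ & H1 & H2). auto.
  - intros P [eps HP]. simpl. exists (C / eps).
    intros We HWe. assert (HW : 0 < We).
    { pose proof (Rdiv_lt_0_compat C eps HC (cond_pos eps)). lra. }
    apply HP. pose proof (ratio_bound lam gam c rho We Hl Hg Hc Hr HW) as Hb.
    fold C in Hb.
    unfold ball; simpl; unfold AbsRing_ball, abs, minus, plus, opp; simpl.
    eapply Rlt_trans; [exact Hb|].
    apply Rmult_lt_reg_r with We; auto. unfold Rdiv at 1. rewrite Rmult_assoc, Rinv_l by lra.
    apply Rmult_lt_reg_r with (/ eps). apply Rinv_0_lt_compat, cond_pos.
    rewrite Rmult_1_r. replace (eps * We * / eps) with We. exact HWe.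
    field. apply Rgt_not_eq, cond_pos.
  - exists C. intros We HW. left. apply ratio_bound; auto.
Qed.
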